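(* (1) Let $\mathfrak{F}$ be crisp. Then $\mathfrak{F}$ is finitely branching (i.e., $R(w)$ is finite for every $w\in\mathfrak{F}$) iff $\mathfrak{F}\models_{\mathbf{K}\mathsf{biG}}\mathbf{1}\ominus\lozenge((p\ominus q)\wedge q)$. (2) Let $\mathfrak{F}$ be fuzzy. Then $\mathfrak{F}$ is finitely branching and $\sup\{wRw':wRw'<1\}<1$ for all $w\in\mathfrak{F}$ iff $\mathfrak{F}\models_{\mathbf{K}\mathsf{biG}}\mathbf{1}\ominus\lozenge((p\ominus q)\wedge q)$.
   Context: $\ominus$ is Gödel coimplication: $b\ominus_\mathsf{G}a=0$ if $b\le a$, and $b$ otherwise; $a\rightarrow_\mathsf{G}b=1$ if $a\le b$, else $b$; $\wedge_\mathsf{G}=\min$, $\vee_\mathsf{G}=\max$; $\mathbf{1}:=p\rightarrow p$. A crisp frame is $\langle W,R\rangle$ with $R\subseteq W\times W$ and $R(w)=\{w':wRw'\}$; a fuzzy frame has $R:W\times W\to[0,1]$ and $R(w)=\{w':wRw'=1\}$. A $\mathbf{K}\mathsf{biG}$ model adds $v:\mathsf{Var}\times W\to[0,1]$, extended by the Gödel operations; on fuzzy frames $v(\lozenge\phi,w)=\sup_{w'}\{wRw'\wedge_\mathsf{G}v(\phi,w')\}$ and $v(\Box\phi,w)=\inf_{w'}\{wRw'\rightarrow_\mathsf{G}v(\phi,w')\}$; on crisp frames $v(\lozenge\phi,w)=\sup\{v(\phi,w'):wRw'\}$, $v(\Box\phi,w)=\inf\{v(\phi,w'):wRw'\}$ ($\sup\varnothing=0$,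 $\inf\varnothing=1$). $\mathfrak{F}\models_{\mathbf{K}\mathsf{biG}}\phi$ iff $v(\phi,w)=1$ for all $w$ and all models on $\mathfrak{F}$. *)

(* Defs.v *)
From mathcomp Require Import all_boot all_order all_algebra.
From mathcomp Require Import boolp classical_sets cardinality reals.
Set Implicit Arguments. Unset Strict Implicit. Unset Printing Implicit Defensive.
Import Order.TTheory GRing.Theory Num.Theory.
Local Open Scope classical_set_scope.
Local Open Scope ring_scope.

Inductive form : Type :=
| Var of nat
| And of form & form
| Or of form & form
| Imp of form & form
| Coimp of form & form     (* Coimp a b  is  a ⊖ b *)
| Box of form
| Dia of form.

Definition p_ : form := Var 0.
Definition q_ : form := Var 1.
(* 1 := p -> p *)
Definition top_ : form := Imp p_ p_.
Definition phi_fb : form := Coimp top_ (Dia (And (Coimp p_ q_) q_)).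

Section Semantics.
Variable R : realType.

Definition gimp (a b : R) : R := if a <= b then 1 else b.
Definition gcoimp (b a : R) : R := if b <= a then 0 else b.

Definition supr (S : set R) : R := if pselect (S !=set0) then sup S else 0.
Definition infr (S : set R) : R := if pselect (S !=set0) then inf S else 1.

Fixpoint cval (W : Type) (Rel : W -> W -> Prop) (v : nat -> W -> R)
  (f : form) (w : W) : R :=
  match f with
  | Var n => v n w
  | And a b => Num.min (cval Rel v a w) (cval Rel v b w)
  | Or a b => Num.max (cval Rel v a w) (cval Rel v b w)
  | Imp a b => gimp (cval Rel v a w) (cval Rel v b w)
  | Coimp a b => gcoimp (cval Rel v a w) (cval Rel v b w)
  | Box a => infr [set cval Rel v a w' | w' in Rel w]
  | Dia a => supr [set cval Rel v a w' | w' in Rel w]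
  end.

Fixpoint fval (W : Type) (Rel : W -> W -> R) (v : nat -> W -> R)
  (f : form) (w : W) : R :=
  match f with
  | Var n => v n w
  | And a b => Num.min (fval Rel v a w) (fval Rel v b w)
  | Or a b => Num.max (fval Rel v a w) (fval Rel v b w)
  | Imp a b => gimp (fval Rel v a w) (fval Rel v b w)
  | Coimp a b => gcoimp (fval Rel v a w) (fval Rel v b w)
  | Box a => infr [set gimp (Rel w w') (fval Rel v a w') | w' in [set: W]]
  | Dia a => supr [set Num.min (Rel w w') (fval Rel v a w') | w' in [set: W]]
  end.

Definition valuation_ok (W : Type) (v : nat -> W -> R) : Prop :=
  forall n w, 0 <= v n w <= 1.

Definition crisp_valid (W : Type) (Rel : W -> W -> Prop) (f : form) : Prop :=
  forall v : nat -> W -> R, valuation_ok v -> forall w, cval Rel v f w = 1.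

Definition fuzzy_valid (W : Type) (Rel : W -> W -> R) (f : form) : Prop :=
  forall v : nat -> W -> R, valuation_ok v -> forall w, fval Rel v f w = 1.

Definition fuzzy_frame (W : Type) (Rel : W -> W -> R) : Prop :=
  forall w w', 0 <= Rel w w' <= 1.

Definition fuzzy_fin_branching (W : Type) (Rel : W -> W -> R) : Prop :=
  forall w, finite_set [set w' | Rel w w' = 1].

End Semantics.

Definition crisp_fin_branching (W : Type) (Rel : W -> W -> Prop) : Prop :=
  forall w, finite_set (Rel w).

(* Main.v *)
Require Import Defs.
From mathcomp Require Import all_boot all_order all_algebra.
From mathcomp Require Import boolp classical_sets functions cardinality reals.
From mathcomp Require Import lra.
Import Order.TTheory GRing.Theory Num.Theory.
Local Open Scope classical_set_scope.
Local Open Scope ring_scope.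

Lemma inf_seq (W : Type) (A : set W) : ~ finite_set A ->
  exists g : nat -> W, (forall n, A (g n)) /\ injective g.
Proof.
move=> /infiniteP/card_leP[f].
exists (fun n => \val (f (SigSub (mem_set (I : [set: nat] n))))).
split.
  move=> n. by have := valP (f (SigSub (mem_set (I : [set: nat] n)))); rewrite inE.
move=> m n /val_inj /(@inj _ _ _ f) h.
have := congr1 val (h (mem_set I) (mem_set I)). by [].
Qed.

Section S.
Variable R : realType.

Lemma seq_bound (s : seq R) : (forall x, x \in s -> x < 1) ->
  exists2 m, m < 1 & forall x, x \in s -> x <= m.
Proof.
elim: s => [|a s IH] h; first by exists 0 => //; rewrite ltr01.
have [m m1 hm] : exists2 m, m < 1 & forall x, x \in s -> x <= m.
  by apply: IH => x xs; apply: h; rewrite inE xs orbT.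
exists (Num.max a m).
  by rewrite gt_max m1 andbT; apply: h; rewrite inE eqxx.
move=> x; rewrite inE => /orP[/eqP->|xs]; rewrite le_max ?lexx //.
by rewrite hm ?orbT.
Qed.

Lemma fin_bound (S : set R) : finite_set S -> (forall x, S x -> x < 1) ->
  exists2 m, m < 1 & forall x, S x -> x <= m.
Proof.
move=> /finite_fsetP[X ->] h.
have [m m1 hm] := @seq_bound (finmap.enum_fset X) (fun x xs => h x xs).
by exists m => // x xs; apply: hm.
Qed.

Lemma supr_lt (S : set R) m : m < 1 -> (forall x, S x -> x <= m) -> supr S < 1.
Proof.
move=> m1 hm; rewrite /supr; case: pselect => h; last by rewrite ltr01.
by apply: le_lt_trans m1; apply: ge_sup.
Qed.

Lemma supr_ub (S : set R) x : (forall y, S y -> y <= 1) -> S x -> x <= supr S.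
Proof.
move=> h Sx; rewrite /supr; case: pselect => [ne|ne]; last by exfalso; apply: ne; exists x.
by apply: sup_upper_bound => //; split => //; exists 1.
Qed.

Lemma gco1 (a d : R) : gcoimp (gimp a a) d = 1 <-> d < 1.
Proof.
rewrite /gimp lexx /gcoimp; case: ifP => h; split => //.
- by move/eqP; rewrite eq_sym oner_eq0.
- by move=> d1; move: h; rewrite leNgt d1.
- by move=> _; rewrite ltNge h.
Qed.

Definition inn (a b : R) := Num.min (gcoimp a b) b.

Lemma inn_lt1 a b : 0 <= b -> a <= 1 -> inn a b < 1.
Proof.
move=> b0 a1; rewrite /inn /gcoimp; case: ifP => h.
  by rewrite gt_min ltr01.
by rewrite gt_min; apply/orP; right; apply: lt_le_trans a1; rewrite ltNge h.
Qed.

Lemma inn_1 b : b < 1 -> inn 1 b = b.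
Proof.
move=> b1; rewrite /inn /gcoimp leNgt b1 /=; apply: min_r; exact: ltW.
Qed.

Lemma inf_val (W : Type) (A : set W) : ~ finite_set A ->
  exists q : W -> R, (forall x, 0 <= q x < 1) /\
     forall m, m < 1 -> exists2 x, A x & m < q x.
Proof.
move=> /inf_seq[g [gA ginj]].
pose q x := if pselect (exists n, g n = x)
  then 1 - ((xget 0%N [set n | g n = x]).+1%:R)^-1 else 0 : R.
have qg n : q (g n) = 1 - (n.+1%:R)^-1.
  rewrite /q; case: pselect => [?|]; last by case; exists n.
  by rewrite (@xget_unique _ 0%N _ n) // => y /ginj.
exists q; split.
  move=> x; rewrite /q; case: pselect => ?; last by rewrite lexx ltr01.
  set k := xget _ _.
  have k0 : 0 < (k.+1%:R : R) by rewrite ltr0n.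
  have i1 : (k.+1%:R : R)^-1 <= 1 by rewrite invf_le1 // ler1n.
  have i0 : 0 < (k.+1%:R : R)^-1 by rewrite invr_gt0.
  apply/andP; split => /=; [by rewrite subr_ge0 | by rewrite ltrBlDr ltrDl].
move=> m m1; set n := Num.bound (1 - m)^-1.
have hm : 0 < 1 - m by lra.
have hi : 0 < (1 - m)^-1 by rewrite invr_gt0.
have := archi_boundP (ltW hi); rewrite -/n => hn.
exists (g n) => //; rewrite qg.
have : (n.+1%:R : R)^-1 < 1 - m.
  rewrite invf_plt ?posrE ?ltr0n //; apply: (lt_trans hn); by rewrite ltr_nat.
by move=> h; rewrite ltrBrDr; rewrite ltrBrDl in h.
Qed.
End S.
Arguments inn {R}. Arguments fin_bound {R}. Arguments supr_lt {R}. Arguments supr_ub {R}. Arguments gco1 {R}. Arguments inn_lt1 {R}. Arguments inn_1 {R}.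

Theorem theorem2 (R : realType) :
  (forall (W : Type) (Rel : W -> W -> Prop),
      crisp_fin_branching Rel <-> crisp_valid R Rel phi_fb) /\
  (forall (W : Type) (Rel : W -> W -> R),
      fuzzy_frame Rel ->
      ((fuzzy_fin_branching Rel /\
        forall w, supr [set Rel w w' | w' in [set w' | Rel w w' < 1]] < 1)
       <-> fuzzy_valid Rel phi_fb)).
Proof.
have vok1 : forall (W : Type) (q : W -> R), (forall x, 0 <= q x < 1) ->
    valuation_ok (fun n x => if n is 0%N then 1 else q x).
  move=> W q hq [|n] x; first by rewrite lexx ler01.
  by have /andP[h1 h2] := hq x; rewrite h1 ltW.
have innv : forall (W : Type) (v : nat -> W -> R) x, valuation_ok v ->
    inn (v 0%N x) (v 1%N x) < 1.
  move=> W v x vok; have /andP[h0 _] := vok 1%N x; have /andP[_ h1] := vok 0%N x.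
  exact: inn_lt1.
split.
- move=> W Rel; split.
  + move=> fb v vok w; rewrite /phi_fb /top_ /p_ /q_ /=; apply/gco1.
    have hlt : forall y, [set inn (v 0%N x) (v 1%N x) | x in Rel w] y -> y < 1.
      by move=> _ [x _ <-]; exact: innv.
    have [m m1 hm] := fin_bound _ (finite_image (fun x => inn (v 0%N x) (v 1%N x)) (fb w)) hlt.
    by apply: (supr_lt _ _ m1) => _ [x Rx <-]; apply: hm; exists x.
  + move=> H w; apply: contrapT => nf.
    have [q [q01 qsup]] := inf_val R _ _ nf.
    have := H _ (vok1 W q q01) w; rewrite /phi_fb /top_ /p_ /q_ /= => /gco1 hD.
    have [x Rx hx] := qsup _ hD.
    have qx1 : q x < 1 by have /andP[] := q01 x.
    move: hx; rewrite ltNge => /negP; apply; apply: supr_ub.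
      move=> _ [y _ <-]; apply: ltW; exact: (innv W _ y (vok1 W q q01)).
    by exists x => //; have := inn_1 _ qx1; rewrite /inn => ->.
- move=> W Rel fr.
  have dle1 : forall (v : nat -> W -> R) w y,
      [set Num.min (Rel w x) (inn (v 0%N x) (v 1%N x)) | x in [set: W]] y -> y <= 1.
    move=> v w _ [x _ <-]; rewrite ge_min; apply/orP; left; by case/andP: (fr w x).
  split.
  + move=> [fb hs] v vok w; rewrite /phi_fb /top_ /p_ /q_ /=; apply/gco1.
    set s := supr [set Rel w w' | w' in [set w' | Rel w w' < 1]].
    have hlt : forall y, [set inn (v 0%N x) (v 1%N x) | x in [set x | Rel w x = 1]] y -> y < 1.
      by move=> _ [x _ <-]; exact: innv.
    have [m m1 hm] := fin_bound _ (finite_image (fun x => inn (v 0%N x) (v 1%N x)) (fb w)) hlt.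
    apply: (supr_lt _ (Num.max s m)); first by rewrite gt_max hs m1.
    move=> _ [x _ <-]; case: (ltP (Rel w x) 1) => hr.
      rewrite ge_min le_max; apply/orP; left; apply/orP; left; apply: supr_ub.
        by move=> _ [y _ <-]; case/andP: (fr w y).
      by exists x.
    rewrite ge_min le_max; apply/orP; right; rewrite le_max; apply/orP; right; apply: hm; exists x => //.
    by apply/eqP; rewrite eq_le hr; case/andP: (fr w x) => _ ->.
  + move=> H; split.
    * move=> w; apply: contrapT => nf.
      have [q [q01 qsup]] := inf_val R _ _ nf.
      have := H _ (vok1 W q q01) w; rewrite /phi_fb /top_ /p_ /q_ /= => /gco1 hD.
      have [x Rx hx] := qsup _ hD.
      have qx1 : q x < 1 by have /andP[] := q01 x.
      move: hx; rewrite ltNge => /negP; apply; apply: supr_ub.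
        exact: (dle1 (fun n x => if n is 0%N then 1 else q x) w).
      exists x => //; rewrite (Rx : Rel w x = 1).
      have := inn_1 _ qx1; rewrite /inn => ->; apply: min_r; exact: ltW.
    * move=> w; rewrite ltNge; apply/negP => hs.
      pose q x := if Rel w x < 1 then Rel w x else 0.
      have q01 : forall x, 0 <= q x < 1.
        move=> x; rewrite /q; case: ifP => h; last by rewrite lexx ltr01.
        by rewrite h andbT; case/andP: (fr w x).
      have := H _ (vok1 W q q01) w; rewrite /phi_fb /top_ /p_ /q_ /= => /gco1 hD.
      move: hs; rewrite /supr; case: pselect => [ne|?]; last by rewrite ler10.
      move=> hs.
      have h : sup [set Rel w w' | w' in [set w' | Rel w w' < 1]] <=
        supr [set Num.min (Rel w x) (inn 1 (q x)) | x in [set: W]].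
        apply: ge_sup => // _ [x hx <-]; apply: supr_ub.
          exact: (dle1 (fun n x => if n is 0%N then 1 else q x) w).
        exists x => //; have qx : q x = Rel w x by rewrite /q hx.
        by rewrite qx inn_1 // minxx.
      by have := le_lt_trans (le_trans hs h) hD; rewrite ltxx.
Qed.
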